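(* Let $(G,S,\tau,\mu,c,\gamma)$ be a generalized network flow instance and $x\in\mathbb{R}_{\ge0}^E$ with $x_e\in[0,\mu_e]$ for every $e\in E$, and let $v\in V\setminus\{\tau\}$. Then the minimum cost of a fractional augmenting path from $v$ in $G^x$, assuming one exists, is attained by an augmenting path.
   Context: A generalized network flow instance: digraph $G=(V,E)$ without anti-parallel edges, sources $S\subseteq V$ with no incoming edges, sink $\tau\in V\setminus S$ with no outgoing edges, and for each edge $e$ a capacity $\mu_e>0$, cost $c_e>0$ and gain $\gamma_e>0$. Residual graph $G^x=(V,E^x)$ with parameters $\mu^x,c^x,\gamma^x$: for every $uv\in E$ with $x_{uv}<\mu_{uv}$ there is a forward edge $uv$ with $\mu^x_{uv}=\mu_{uv}-x_{uv}$, $c^x_{uv}=c_{uv}$, $\gamma^x_{uv}=\gamma_{uv}$; for every $uv\in E$ with $x_{uv}>0$ there is a backward edge $vu$ with $\mu^x_{vu}=\gamma_{uv}x_{uv}$, $c^x_{vu}=0$, $\gamma^x_{vu}=1/\gamma_{uv}$. A fractional augmenting path from $s\in V\setminus\{\tau\}$ in $G^x$ is a vector $f\in\mathbb{R}_{\ge0}^{E^x}$ (capacities are ignored) such that $\sum_{e\in\delta^+_{G^x}(w)}f_e-\sum_{e\in\delta^-_{G^x}(w)}\gamma^x_ef_e$ equals $1$ for $w=s$ and $0$ for $w\in V\setminus\{s,\tau\}$; its cost is $\sum_{e\in E^x}c^x_ef_e$. It is an augmenting path if moreover its support is (a) a path from $s$ to $\tau$ in $G^x$, or (b) a cycle in $G^x$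 containing $s$ but not $\tau$, or (c) the union of a cycle $C$ in $G^x$ containing neither $s$ nor $\tau$ and a path in $G^x$ from $s$ to $C$ internally disjoint from $C$. *)

(* Defs.v *)
From HB Require Import structures.
From mathcomp Require Import all_boot all_order all_algebra.
Set Implicit Arguments. Unset Strict Implicit. Unset Printing Implicit Defensive.
Import Order.TTheory GRing.Theory Num.Theory.
Local Open Scope ring_scope.

(* A digraph on a finite vertex type V is given by its edge relation E;
   an edge uv is the pair (u,w) with E u w.  Edge parameters (capacity,
   cost, gain) and flows are functions V -> V -> R, only relevant on edges. *)

Section GNF.
Variables (R : realFieldType) (V : finType).

Definition gnf_instance (E : rel V) (S : {set V}) (tau : V)
  (mu c gamma : V -> V -> R) : Prop :=
  [/\ (forall u w, E u w -> ~~ E w u),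
      (forall s u, s \in S -> ~~ E u s),
      tau \notin S,
      (forall u, ~~ E tau u)
    & (forall u w, E u w -> [/\ 0 < mu u w, 0 < c u w & 0 < gamma u w])].

Definition feasible_x (E : rel V) (mu x : V -> V -> R) : Prop :=
  forall u w, E u w -> 0 <= x u w <= mu u w.

(* residual graph G^x: forward edge uw if x_uw < mu_uw, backward edge wu
   if x_uw > 0 (no anti-parallel edges, so these never collide) *)
Definition res_edge (E : rel V) (mu x : V -> V -> R) : rel V :=
  fun u w => (E u w && (x u w < mu u w)) || (E w u && (0 < x w u)).

Definition res_cost (E : rel V) (c : V -> V -> R) (u w : V) : R :=
  if E u w then c u w else 0.

Definition res_gain (E : rel V) (gamma : V -> V -> R) (u w : V) : R :=
  if E u w then gamma u w else (gamma w u)^-1.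

(* fractional augmenting path from s in G^x: f >= 0 on E^x, zero outside
   E^x (f is a vector indexed by E^x), with gain-flow conservation *)
Definition frac_aug_path (E : rel V) (tau : V) (mu gamma x f : V -> V -> R)
  (s : V) : Prop :=
  let Ex := res_edge E mu x in
  [/\ (forall u w, 0 <= f u w),
      (forall u w, ~~ Ex u w -> f u w = 0)
    & (forall w, w != tau ->
         \sum_(u | Ex w u) f w u - \sum_(u | Ex u w) res_gain E gamma u w * f u w
         = (if w == s then 1 else 0))].

Definition flow_cost (E : rel V) (mu c x f : V -> V -> R) : R :=
  \sum_(u : V) \sum_(w | res_edge E mu x u w) res_cost E c u w * f u w.

Definition supp (f : V -> V -> R) : rel V := fun u w => f u w != 0.

Definition simple_path (Ex : rel V) (s : V) (p : seq V) : bool :=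
  path Ex s p && uniq (s :: p).

Definition simple_cycle (Ex : rel V) (C : seq V) : bool :=
  [&& C != [::], cycle Ex C & uniq C].

Definition path_edges (s : V) (p : seq V) : seq (V * V) := zip (s :: p) p.
Definition cycle_edges (C : seq V) : seq (V * V) := zip C (rot 1 C).

Definition aug_support (Ex : rel V) (tau s : V) (F : rel V) : Prop :=
  (exists p, [/\ simple_path Ex s p, last s p = tau &
                 forall u w, F u w = ((u, w) \in path_edges s p)])
  \/
  (exists C, [/\ simple_cycle Ex C, s \in C, tau \notin C &
                 forall u w, F u w = ((u, w) \in cycle_edges C)])
  \/
  (exists C p, [/\ [&& simple_cycle Ex C, s \notin C & tau \notin C],
                   simple_path Ex s p,
                   last s p \in C,
                   all (fun u => u \notin C) (belast s p) &
                   forall u w, F u w =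
                     ((u, w) \in cycle_edges C ++ path_edges s p)]).

Definition aug_path (E : rel V) (tau : V) (mu gamma x f : V -> V -> R)
  (s : V) : Prop :=
  frac_aug_path E tau mu gamma x f s /\
  aug_support (res_edge E mu x) tau s (supp f).

End GNF.

(* Main.v *)
Require Import Defs.
From HB Require Import structures.
From mathcomp Require Import all_boot all_order all_algebra.
From mathcomp Require Import ring lra.
From Stdlib Require Import Classical.
Set Implicit Arguments. Unset Strict Implicit. Unset Printing Implicit Defensive.
Import Order.TTheory GRing.Theory Num.Theory.
Local Open Scope ring_scope.

Lemma list_min (R : realDomainType) (T : eqType) (l : seq T) (P : T -> Prop)
  (phi : T -> R) :
  (exists2 y, y \in l & P y) ->
  exists y, [/\ y \in l, P y & forall z, z \in l -> P z -> phi y <= phi z].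
Proof.
elim: l => [|a l IH] [y]; first by [].
rewrite in_cons => /orP [/eqP -> Pa|yl Py].
  have [Hl|Hl] := classic (exists2 y, y \in l & P y).
    have [z [zl Pz Hz]] := IH Hl.
    have [le|lt] := leP (phi a) (phi z).
      exists a; split => //; first by rewrite mem_head.
      move=> w; rewrite in_cons => /orP [/eqP -> //|wl Pw].
      exact: le_trans le (Hz w wl Pw).
    exists z; split => //; first by rewrite in_cons zl orbT.
    move=> w; rewrite in_cons => /orP [/eqP -> _|]; first exact: ltW.
    exact: Hz.
  exists a; split => //; first by rewrite mem_head.
  move=> w; rewrite in_cons => /orP [/eqP -> //|wl Pw].
  by case: Hl; exists w.
have [z [zl Pz Hz]] := IH (ex_intro2 _ _ y yl Py).
have [Pa|nPa] := classic (P a).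
  have [le|lt] := leP (phi a) (phi z).
    exists a; split => //; first by rewrite mem_head.
    move=> w; rewrite in_cons => /orP [/eqP -> //|wl Pw].
    exact: le_trans le (Hz w wl Pw).
  exists z; split => //; first by rewrite in_cons zl orbT.
  move=> w; rewrite in_cons => /orP [/eqP -> _|]; first exact: ltW.
  exact: Hz.
exists z; split => //; first by rewrite in_cons zl orbT.
move=> w; rewrite in_cons => /orP [/eqP -> //|]; last exact: Hz.
Qed.

Fixpoint seqs_upto (T : finType) (k : nat) : seq (seq T) :=
  if k is k'.+1 then [::] :: [seq y :: l | y <- enum T, l <- seqs_upto T k']
  else [:: [::]].

Lemma mem_seqs_upto (T : finType) k (l : seq T) : (size l <= k)%N -> l \in seqs_upto T k.
Proof.
elim: k l => [|k IH] [|y l] //=; rewrite ?in_cons ?eqxx //.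
rewrite ltnS => /IH H; apply/orP; right.
apply/allpairsP; exists (y, l) => /=; split => //; by rewrite mem_enum.
Qed.

Lemma uniq_size_card (T : finType) (l : seq T) : uniq l -> (size l <= #|T|)%N.
Proof. move=> u; rewrite -(card_uniqP u); exact: max_card. Qed.

Lemma pos_add_gt0 (R : realDomainType) (p q : R) : 0 <= p -> 0 <= q ->
  (0 < p + q) = (0 < p) || (0 < q).
Proof.
move=> hp hq; apply/idP/orP.
  move=> h; case: (ltrP 0 p) => hp'; first by left.
  right; have p0 : p = 0 by apply/eqP; rewrite eq_le hp' hp.
  by move: h; rewrite p0 add0r.
case=> h; first by rewrite (lt_le_trans h) // lerDl.
by rewrite (lt_le_trans h) // lerDr.
Qed.

Lemma zip_cons_rcons (T : Type) (y z : T) b :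
  zip (y :: rcons b z) (rcons b z) = zip (y :: b) (rcons b z).
Proof. by elim: b y => [|a b IH] y //=; rewrite IH. Qed.

Lemma mem_zip_belast (T : eqType) (a : T) l u w :
  (u, w) \in zip (a :: l) l -> u \in belast a l.
Proof.
elim: l a => [|y l IH] a //=; rewrite !in_cons => /orP [/eqP [-> _]|/IH ->].
  by rewrite eqxx.
by rewrite orbT.
Qed.

Lemma mem_zip_path (T : eqType) (e : rel T) (a : T) l u w :
  path e a l -> (u, w) \in zip (a :: l) l -> e u w.
Proof.
elim: l a => [|y l IH] a //= /andP [ha hp]; rewrite in_cons => /orP [/eqP [-> ->] //|].
exact: IH.
Qed.
Lemma seq_cases (T : Type) (l : seq T) : l = [::] \/ exists y l', l = y :: l'.
Proof. by case: l => [|y l]; [left|right; exists y, l]. Qed.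

Section Main.
Variables (R : realFieldType) (V : finType) (E : rel V) (S : {set V}) (tau : V)
  (mu c gamma x : V -> V -> R) (s : V).
Hypothesis gnf : gnf_instance E S tau mu c gamma.

Local Notation Ex := (res_edge E mu x).
Local Notation gain := (res_gain E gamma).
Definition exc (h : V -> V -> R) (w : V) : R :=
  \sum_(u | Ex w u) h w u - \sum_(u | Ex u w) gain u w * h u w.
Local Notation cost := (flow_cost E mu c x).
Local Notation fap h := (frac_aug_path E tau mu gamma x h s).

Lemma fapE h : fap h <-> [/\ (forall u w, 0 <= h u w),
      (forall u w, ~~ Ex u w -> h u w = 0)
    & (forall w, w != tau -> exc h w = (if w == s then 1 else 0))].
Proof. by []. Qed.

Lemma gain_pos u w : Ex u w -> 0 < gain u w.
Proof.
case: gnf => _ _ _ _ H.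
rewrite /res_edge /res_gain => /orP [/andP [euw _]|/andP [ewu _]].
  by rewrite euw; case: (H _ _ euw).
case: (boolP (E u w)) => [euw|_]; first by case: (H _ _ euw).
by rewrite invr_gt0; case: (H _ _ ewu).
Qed.

Lemma rcost_ge0 u w : 0 <= res_cost E c u w.
Proof.
case: gnf => _ _ _ _ H; rewrite /res_cost.
case: (boolP (E u w)) => // euw; case: (H _ _ euw) => _ /ltW ? _ //.
Qed.

Lemma exc_lin h1 h2 k w :
  exc (fun u w => h1 u w + k * h2 u w) w = exc h1 w + k * exc h2 w.
Proof.
rewrite /exc !big_split /= -!mulr_sumr mulrBr.
under [X in _ - X = _]eq_bigr => u _ do rewrite mulrDr mulrCA.
rewrite big_split /= -mulr_sumr; lra.
Qed.

Lemma exc_ext h1 h2 w : (forall u w, h1 u w = h2 u w) -> exc h1 w = exc h2 w.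
Proof.
move=> H; rewrite /exc; congr (_ - _); apply: eq_bigr => u _; by rewrite H.
Qed.

Lemma cost_lin h1 h2 k :
  cost (fun u w => h1 u w + k * h2 u w) = cost h1 + k * cost h2.
Proof.
rewrite /flow_cost mulr_sumr -big_split /=; apply: eq_bigr => u _.
rewrite mulr_sumr -big_split /=; apply: eq_bigr => w _; ring.
Qed.

Lemma cost_ext h1 h2 : (forall u w, h1 u w = h2 u w) -> cost h1 = cost h2.
Proof.
move=> H; rewrite /flow_cost; apply: eq_bigr => u _; apply: eq_bigr => w _; by rewrite H.
Qed.

Fixpoint pflow (a : V) (l : seq V) : V -> V -> R :=
  match l with
  | [::] => fun _ _ => 0
  | y :: l' => fun u w => (if (u == a) && (w == y) then 1 else 0) + gain a y * pflow y l' u w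
  end.

Fixpoint gprod (a : V) (l : seq V) : R :=
  match l with
  | [::] => 1
  | y :: l' => gain a y * gprod y l'
  end.

Lemma exc_edge a y w : Ex a y ->
  exc (fun u w => if (u == a) && (w == y) then 1 else 0) w =
  (if w == a then 1 else 0) - gain a y * (if w == y then 1 else 0).
Proof.
move=> ay; rewrite /exc; congr (_ - _).
  case: (eqVneq w a) => [->|nwa].
    rewrite (bigD1 y) //= !eqxx big1 ?addr0 // => u /andP [_ nuy].
    by rewrite (negbTE nuy).
  by rewrite big1 // => u _; rewrite (negbTE nwa).
case: (eqVneq w y) => [->|nwy].
  rewrite (bigD1 a) //= !eqxx mulr1 big1 ?addr0 // => u /andP [_ nua].
  by rewrite (negbTE nua) mulr0.
rewrite mulr0 big1 // => u _.
by rewrite andbF mulr0.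
Qed.

Lemma exc_pflow a l w : path Ex a l ->
  exc (pflow a l) w = (if w == a then 1 else 0) - gprod a l * (if w == last a l then 1 else 0).
Proof.
elim: l a => [|y l IH] a /=.
  move=> _; rewrite /exc !big1 ?subr0 ?mul1r ?subrr // => u _; by rewrite ?mulr0.
move=> /andP [ay pl].
rewrite (exc_lin (fun u w => if (u == a) && (w == y) then 1 else 0) (pflow y l)).
rewrite exc_edge // IH //; move: (if w == a then _ else _) (if w == y then _ else _) (if w == last y l then _ else _) => A B C; ring.
Qed.

Lemma gprod_pos a l : path Ex a l -> 0 < gprod a l.
Proof.
elim: l a => [|y l IH] a //= /andP [ay pl]; by rewrite mulr_gt0 ?gain_pos ?IH.
Qed.

Lemma pflow_ge0 a l u w : path Ex a l -> 0 <= pflow a l u w.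
Proof.
elim: l a => [|y l IH] a //= /andP [ay pl].
rewrite addr_ge0 //; first by case: ifP.
by rewrite mulr_ge0 ?IH // ltW // gain_pos.
Qed.

Lemma pflow_gt0 a l u w : path Ex a l ->
  (0 < pflow a l u w) = ((u, w) \in zip (a :: l) l).
Proof.
elim: l a => [|y l IH] a /=; first by rewrite ltxx.
move=> /andP [ay pl].
rewrite pos_add_gt0; last first.
- by rewrite mulr_ge0 ?pflow_ge0 // ltW // gain_pos.
- by case: ifP.
rewrite pmulr_rgt0 ?gain_pos // IH // in_cons xpair_eqE.
by case: ((u == a) && (w == y)); rewrite ?ltr01 ?ltxx.
Qed.

Lemma pflow_neq0 a l u w : path Ex a l ->
  (pflow a l u w != 0) = ((u, w) \in zip (a :: l) l).
Proof.
move=> pl; by rewrite -pflow_gt0 // lt_def pflow_ge0 // andbT.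
Qed.

Lemma pflow_out a l u w : path Ex a l -> ~~ Ex u w -> pflow a l u w = 0.
Proof.
move=> pl nE; apply/eqP; apply: contraNT nE; rewrite pflow_neq0 //.
exact: mem_zip_path.
Qed.

Definition nsupp (h : V -> V -> R) := #|[set e : V * V | h e.1 e.2 != 0]|.

Lemma reduce_core f d : fap f -> (forall u w, f u w = 0 -> d u w = 0) ->
  (forall w, w != tau -> exc d w = 0) -> cost d <= 0 ->
  (exists u w, d u w < 0) ->
  exists h, [/\ fap h, cost h <= cost f & (nsupp h < nsupp f)%N].
Proof.
move=> /fapE [f0 fout fexc] dsupp dexc dcost [u0 [w0 neg0]].
have [[u1 w1] [_ /= neg1 Hmin]] := @list_min _ _ (enum {: V * V})
  (fun e => d e.1 e.2 < 0) (fun e => f e.1 e.2 / - d e.1 e.2)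
  (ex_intro2 _ _ (u0, w0) (mem_enum _ _) neg0).
set t := f u1 w1 / - d u1 w1.
have t0 : 0 <= t by rewrite divr_ge0 // oppr_ge0 ltW.
exists (fun u w => f u w + t * d u w); split.
- apply/fapE; split.
  + move=> u w; case: (ltrP (d u w) 0) => duw.
      have := Hmin (u, w) (mem_enum _ _) duw; rewrite /= -/t.
      rewrite ler_pdivlMr ?oppr_gt0 // => H.
      by rewrite mulrN in H; lra.
    by rewrite addr_ge0 // mulr_ge0.
  + by move=> u w nE; rewrite fout // dsupp ?fout // mulr0 addr0.
  + by move=> w nwt; rewrite exc_lin fexc // dexc // mulr0 addr0.
- rewrite cost_lin; rewrite -[X in _ <= X]addr0 lerD2l.
  exact: mulr_ge0_le0.
- apply: proper_card; apply/properP; split.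
    apply/subsetP => -[u w]; rewrite !inE /=; apply: contraNN => /eqP fz.
    by rewrite fz dsupp // mulr0 addr0.
  exists (u1, w1); rewrite !inE /=.
    apply/eqP => fz; move: neg1; by rewrite dsupp // ltxx.
  rewrite negbK /t; apply/eqP; field.
  by rewrite lt_eqF.
Qed.

Lemma exc_opp d w : exc (fun u w => - d u w) w = - exc d w.
Proof.
rewrite (@exc_ext _ (fun u w => (fun _ _ => 0) u w + (-1) * d u w)); last first.
  by move=> u v; rewrite add0r mulN1r.
rewrite exc_lin /exc big1 // [X in 0 - X]big1 => [|u _]; last by rewrite mulr0.
by rewrite subr0 add0r mulN1r.
Qed.

Lemma cost_opp d : cost (fun u w => - d u w) = - cost d.
Proof.
rewrite (@cost_ext _ (fun u w => (fun _ _ => 0) u w + (-1) * d u w)); last first.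
  by move=> u v; rewrite add0r mulN1r.
rewrite cost_lin /flow_cost big1 ?add0r ?mulN1r // => u _.
by rewrite big1 // => w _; rewrite mulr0.
Qed.

Lemma cost_ge0 d : (forall u w, 0 <= d u w) -> 0 <= cost d.
Proof.
move=> H; rewrite /flow_cost; apply: sumr_ge0 => u _; apply: sumr_ge0 => w _.
by rewrite mulr_ge0 ?rcost_ge0.
Qed.

Lemma reduce2 f d : fap f -> (forall u w, f u w = 0 -> d u w = 0) ->
  (forall w, w != tau -> exc d w = 0) -> cost d <= 0 ->
  (exists u w, d u w != 0) ->
  exists h, [/\ fap h, cost h <= cost f & (nsupp h < nsupp f)%N].
Proof.
move=> ff ds de dc [u0 [w0 nz]].
have [Hn|Hn] := classic (exists u w, d u w < 0); first exact: reduce_core Hn.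
have dpos : forall u w, 0 <= d u w.
  move=> u w; case: (ltrP (d u w) 0) => // neg; case: Hn; by exists u, w.
apply: (@reduce_core f (fun u w => - d u w)) => //.
- by move=> u w /ds ->; rewrite oppr0.
- by move=> w /de; rewrite exc_opp => ->; rewrite oppr0.
- have := cost_ge0 dpos; rewrite cost_opp; lra.
- exists u0, w0; rewrite oppr_lt0 lt_def nz; exact: dpos.
Qed.

Lemma reduce f d : fap f -> (forall u w, f u w = 0 -> d u w = 0) ->
  (forall w, w != tau -> exc d w = 0) ->
  (exists u w, d u w != 0) ->
  exists h, [/\ fap h, cost h <= cost f & (nsupp h < nsupp f)%N].
Proof.
move=> ff ds de [u0 [w0 nz]].
case: (lerP (cost d) 0) => dc; first by apply: (reduce2 ff ds de dc); exists u0, w0.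
apply: (@reduce2 f (fun u w => - d u w)) => //.
- by move=> u w /ds ->; rewrite oppr0.
- by move=> w /de; rewrite exc_opp => ->; rewrite oppr0.
- rewrite cost_opp; lra.
- by exists u0, w0; rewrite oppr_eq0.
Qed.

Lemma out_edge f w : fap f -> w != tau -> (w = s \/ exists u, f u w != 0) ->
  exists y, f w y != 0.
Proof.
move=> /fapE [f0 fout fexc] wt H.
apply: NNPP => Hn.
have fz : forall y, f w y = 0.
  by move=> y; apply/eqP; apply: contraT => ne; by case: Hn; exists y.
have := fexc w wt; rewrite /exc big1 ?add0r; last by move=> y _; exact: fz.
move=> Hexc.
have sge0 : 0 <= \sum_(u | Ex u w) gain u w * f u w.
  apply: sumr_ge0 => u Eu; by rewrite mulr_ge0 // ltW // gain_pos.
case: H => [wE|[u nz]].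
  by move: Hexc sge0; rewrite wE eqxx; lra.
have Eu : Ex u w by apply: contraT => /fout fz0; rewrite fz0 eqxx in nz.
have pos : 0 < gain u w * f u w by rewrite mulr_gt0 ?gain_pos // lt_def nz f0.
have : gain u w * f u w <= \sum_(u | Ex u w) gain u w * f u w.
  rewrite (bigD1 u) //= lerDl; apply: sumr_ge0 => v /andP [Ev _].
  by rewrite mulr_ge0 // ltW // gain_pos.
move: Hexc; case: ifP => _ ; lra.
Qed.

Lemma walk_aux f n : fap f -> forall p, (#|V| <= size p + n)%N ->
  path (supp f) s p -> uniq (s :: p) -> tau \notin s :: p ->
  (exists p, [/\ path (supp f) s p, uniq (s :: p) & last s p = tau]) \/
  (exists a b, [/\ path (supp f) s (a ++ b), uniq (s :: a ++ b),
     tau \notin s :: a ++ b & supp f (last s (a ++ b)) (last s a)]).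
Proof.
move=> ff; elim: n => [|n IH] p.
  rewrite addn0 => Hs _ u; have := uniq_size_card u; rewrite /= => H.
  by have := leq_trans H Hs; rewrite ltnn.
move=> Hs pp u nt.
have wt : last s p != tau.
  by apply: contraNN nt => /eqP <-; exact: mem_last.
have [z Fz] : exists z, f (last s p) z != 0.
  apply: out_edge => //; move: pp; case/lastP: p {Hs u nt wt} => [|p0 y]; first by left.
  rewrite rcons_path last_rcons => /andP [_ Fy]; right; by exists (last s p0).
have [zin|zout] := boolP (z \in s :: p).
  right; move: zin; rewrite in_cons => /orP [/eqP zs|zp].
    exists [::], p; split => //; by rewrite zs in Fz.
  case/splitPr: zp pp u nt Fz => p1 p2 pp u nt Fz.
  exists (rcons p1 z), p2; rewrite cat_rcons last_rcons; split => //.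
have pp' : path (supp f) s (rcons p z) by rewrite rcons_path pp.
have u' : uniq (s :: rcons p z) by rewrite -rcons_cons rcons_uniq zout u.
case: (eqVneq z tau) => [zt|znt].
  left; exists (rcons p z); by rewrite last_rcons.
apply: (IH (rcons p z)) => //.
  by rewrite size_rcons addSnnS.
by rewrite -rcons_cons mem_rcons in_cons negb_or eq_sym znt.
Qed.

Lemma walk f : fap f -> s != tau ->
  (exists p, [/\ path (supp f) s p, uniq (s :: p) & last s p = tau]) \/
  (exists a b, [/\ path (supp f) s (a ++ b), uniq (s :: a ++ b),
     tau \notin s :: a ++ b & supp f (last s (a ++ b)) (last s a)]).
Proof.
move=> ff st; apply: (@walk_aux f #|V| ff [::]) => //.
by rewrite inE eq_sym.
Qed.

Definition kap (a b : seq V) : R :=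
  gprod s a / (1 - gprod (last s a) (rcons b (last s a))).

Definition gW (W : bool * seq V * seq V) : V -> V -> R :=
  let: (fl, a, b) := W in
  if fl then pflow s a
  else fun u w => pflow s a u w + kap a b * pflow (last s a) (rcons b (last s a)) u w.

Local Notation augp h := (aug_path E tau mu gamma x h s).

Lemma path_aug p : path Ex s p -> uniq (s :: p) -> last s p = tau ->
  augp (gW (true, p, [::])).
Proof.
move=> pp u lt; split.
  apply/fapE; split => /=.
  - by move=> ? ?; exact: pflow_ge0.
  - by move=> ? ?; exact: pflow_out.
  - by move=> w wt; rewrite exc_pflow // lt (negbTE wt) mulr0 subr0.
left; exists p; split => //; first by rewrite /simple_path pp.
by move=> a b; rewrite /supp /= pflow_neq0.
Qed.

Lemma cat_belast (a b : seq V) : s :: a ++ b = belast s a ++ last s a :: b.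
Proof. by rewrite -cat_cons lastI cat_rcons. Qed.

Lemma lolli_aug a b : path Ex s (a ++ b) -> uniq (s :: a ++ b) ->
  tau \notin s :: a ++ b -> Ex (last s (a ++ b)) (last s a) ->
  gprod (last s a) (rcons b (last s a)) < 1 ->
  augp (gW (false, a, b)).
Proof.
set r := last s a; set G := gprod r (rcons b r).
move=> pab uab tab cl G1.
have uab0 := uab.
have pa : path Ex s a by move: pab; rewrite cat_path => /andP [].
have pc : path Ex r (rcons b r).
  by move: pab cl; rewrite cat_path rcons_path last_cat => /andP [_ ->] ->.
have k0 : 0 < kap a b by rewrite /kap divr_gt0 ?gprod_pos // subr_gt0.
have G1' : 1 - G != 0 by rewrite subr_eq0 eq_sym lt_eqF.
have q0 : forall u w, 0 <= pflow r (rcons b r) u w by move=> u w; exact: pflow_ge0.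
have p0 : forall u w, 0 <= pflow s a u w by move=> u w; exact: pflow_ge0.
have kq0 : forall u w, 0 <= kap a b * pflow r (rcons b r) u w.
  by move=> u w; exact: mulr_ge0 (ltW k0) (q0 u w).
have supE : forall u w, supp (gW (false, a, b)) u w =
    ((u, w) \in zip (s :: a) a) || ((u, w) \in zip (r :: rcons b r) (rcons b r)).
  move=> u w; rewrite /supp /= -/r -!pflow_gt0 // -[X in _ || X](pmulr_rgt0 _ k0).
  by rewrite -pos_add_gt0 // lt_def addr_ge0 // andbT.
split.
  apply/fapE; split => /=.
  - by move=> u w; rewrite -/r addr_ge0.
  - by move=> ? ? nE; rewrite !pflow_out // mulr0 addr0.
  - move=> w wt; rewrite exc_lin !exc_pflow // last_rcons -/r -/G /kap -/r -/G.
    move: (if w == s then _ else _) (if w == r then _ else _) => A B.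
    by field.
move: uab tab; rewrite cat_belast -/r => uab tab.
move: uab; rewrite cat_uniq => /and3P [ub /hasPn dis urb].
have bnot : forall y, y \in belast s a -> y \notin r :: b.
  move=> y yb; apply/negP => yrb; by move: (dis y yrb); rewrite yb.
have taurb : tau \notin r :: b by move: tab; rewrite mem_cat negb_or => /andP [].
have cycE : forall u w, ((u, w) \in zip (r :: rcons b r) (rcons b r)) =
    ((u, w) \in cycle_edges (r :: b)).
  by move=> u w; rewrite /cycle_edges rot1_cons zip_cons_rcons.
have [a0|[y [a' aE]]] := seq_cases a.
  have rs : r = s by rewrite /r a0.
  right; left; exists (s :: b); split => //.
  - by rewrite /simple_cycle /=; rewrite rs in pc urb; rewrite pc -cons_uniq urb.
  - exact: mem_head.
  - by rewrite -rs.
  - by move=> u w; rewrite supE a0 /= cycE rs.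
have sbel : s \in belast s a by rewrite aE /= mem_head.
right; right; exists (r :: b), a; split => //.
- by rewrite /simple_cycle /= pc -cons_uniq urb taurb andbT /= bnot.
- rewrite /simple_path pa /=.
  by move: uab0; rewrite -cat_cons cat_uniq => /andP [].
- exact: mem_head.
- by apply/allP => z; exact: bnot.
- by move=> u w; rewrite supE mem_cat orbC -cycE.
Qed.


Lemma suppEx f : fap f -> forall u w, supp f u w -> Ex u w.
Proof.
move=> /fapE [_ fout _] u w; rewrite /supp; apply: contraNT => /fout ->.
by rewrite eqxx.
Qed.

Lemma pflow_zero f a l u w : fap f -> path (supp f) a l -> f u w = 0 ->
  pflow a l u w = 0.
Proof.
move=> ff pF fz; have pE := sub_path (suppEx ff) pF.
apply/eqP; apply: contraT; rewrite pflow_neq0 // => /(mem_zip_path pF).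
by rewrite /supp fz eqxx.
Qed.

Lemma compare_step f g : fap f -> fap g -> (forall u w, f u w = 0 -> g u w = 0) ->
  cost f < cost g ->
  exists h, [/\ fap h, cost h <= cost f & (nsupp h < nsupp f)%N].
Proof.
move=> ff fg sup lt; have ff' := ff; have fg' := fg.
move/fapE: ff' => [_ _ fexc]; move/fapE: fg' => [_ _ gexc].
apply: (@reduce f (fun u w => f u w + (-1) * g u w)) => //.
- by move=> u w fz; rewrite fz sup // mulr0 addr0.
- by move=> w wt; rewrite exc_lin fexc // gexc //; case: ifP => _; ring.
- apply: NNPP => Hn; move: lt.
  rewrite (@cost_ext g f) ?ltxx // => u w.
  have : f u w + (-1) * g u w = 0.
    by apply/eqP; apply: contraT => nz; case: Hn; exists u, w.
  lra.
Qed.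

Definition cands : seq (bool * seq V * seq V) :=
  [seq (p, b) | p <- [seq (fl, a) | fl <- [:: true; false], a <- seqs_upto V #|V|],
                b <- seqs_upto V #|V|].

Lemma mem_cands fl a b : uniq (s :: a ++ b) -> (fl, a, b) \in cands.
Proof.
move=> u; have := uniq_size_card u; rewrite /= size_cat => H.
apply: (@allpairs_f _ _ _ (fun p b => (p, b))).
  apply: (@allpairs_f _ _ _ (fun fl a => (fl, a))); first by case: fl.
  apply: mem_seqs_upto; apply: leq_trans H; apply: leq_trans (leqnSn _); exact: leq_addr.
apply: mem_seqs_upto; apply: leq_trans H; apply: leq_trans (leqnSn _); exact: leq_addl.
Qed.

Lemma main n : forall f, (nsupp f < n)%N -> fap f -> s != tau ->
  exists W, [/\ W \in cands, augp (gW W) & cost (gW W) <= cost f].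
Proof.
elim: n => [|n IH] f //.
move=> Hn ff st.
have IH' : forall h, fap h -> cost h <= cost f -> (nsupp h < nsupp f)%N ->
    exists W, [/\ W \in cands, augp (gW W) & cost (gW W) <= cost f].
  move=> h fh ch nh; have [|W [Wc Wa Wl]] := IH h _ fh st.
    exact: leq_trans nh Hn.
  exists W; split => //; exact: le_trans Wl ch.
have ff' := ff; move/fapE: ff' => [f0 fout fexc].
case: (walk ff st) => [[p [pp up lp]]|[a [b [pab uab tab cl]]]].
  have pE := sub_path (suppEx ff) pp.
  have ag := path_aug pE up lp.
  case: (lerP (cost (gW (true, p, [::]))) (cost f)) => cmp.
    exists (true, p, [::]); split => //; apply: mem_cands; by rewrite cats0.
  have [h [fh ch nh]] := compare_step ff ag.1 (fun u w fz => pflow_zero ff pp fz) cmp.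
  exact: IH' fh ch nh.
set r := last s a; set G := gprod r (rcons b r).
have paF : path (supp f) s a by move: pab; rewrite cat_path => /andP [].
have pcF : path (supp f) r (rcons b r).
  by move: pab cl; rewrite cat_path rcons_path last_cat => /andP [_ ->] ->.
have pa := sub_path (suppEx ff) paF.
have pc := sub_path (suppEx ff) pcF.
have pabE := sub_path (suppEx ff) pab.
have clE := suppEx ff cl.
have [y [l cE]] : exists y l, rcons b r = y :: l.
  by case: (b) => [|z b']; [exists r, [::] | exists z, (rcons b' r)].
have qry : 0 < pflow r (rcons b r) r y by rewrite pflow_gt0 // cE mem_head.
have pry : pflow s a r y = 0.
  apply/eqP; apply: contraT; rewrite pflow_neq0 // => /mem_zip_belast rb.
  move: uab; rewrite cat_belast -/r cat_uniq => /and3P [_ /hasPn dis _].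
  by move: (dis r (mem_head _ _)); rewrite rb.
have [G1|G1|G1] := ltrgtP G 1.
- have ag := lolli_aug pabE uab tab clE G1.
  case: (lerP (cost (gW (false, a, b))) (cost f)) => cmp.
    exists (false, a, b); split => //; exact: mem_cands.
  have sup : forall u w, f u w = 0 -> gW (false, a, b) u w = 0.
    move=> u w fz /=; rewrite -/r (pflow_zero ff paF fz) (pflow_zero ff pcF fz).
    by rewrite mulr0 addr0.
  have [h [fh ch nh]] := compare_step ff ag.1 sup cmp.
  exact: IH' fh ch nh.
- have k0 : 0 < - kap a b.
    rewrite /kap -/r -/G -mulrN -invrN opprB divr_gt0 ?gprod_pos // subr_gt0 //.
  have [h [fh ch nh]] : exists h, [/\ fap h, cost h <= cost f & (nsupp h < nsupp f)%N]; last exact: IH' fh ch nh.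
  apply: (@reduce f
     (fun u w => (f u w + (-1) * pflow s a u w) + (- kap a b) * pflow r (rcons b r) u w) ff).
  + move=> u w fz; by rewrite fz (pflow_zero ff paF fz) (pflow_zero ff pcF fz) !mulr0 !addr0.
  + move=> w wt; rewrite !exc_lin fexc // !exc_pflow // last_rcons -/r -/G /kap -/r -/G.
    have G1' : 1 - G != 0 by rewrite subr_eq0 eq_sym gt_eqF.
    move: (if w == s then _ else _) (if w == r then _ else _) => A B.
    by field.
  + exists r, y; rewrite pry mulr0 addr0; apply: lt0r_neq0.
    by rewrite ltr_pwDr ?f0 // mulr_gt0.
- have [h [fh ch nh]] : exists h, [/\ fap h, cost h <= cost f & (nsupp h < nsupp f)%N]; last exact: IH' fh ch nh.
  apply: (@reduce f (pflow r (rcons b r)) ff).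
  + by move=> u w fz; exact: pflow_zero ff pcF fz.
  + by move=> w wt; rewrite exc_pflow // last_rcons -/G G1 mul1r subrr.
  + by exists r, y; rewrite lt0r_neq0.
Qed.

Lemma lemma1_sec : s != tau -> (exists f, fap f) ->
  exists f, augp f /\ forall g, fap g -> cost f <= cost g.
Proof.
move=> st [f0 ff0].
have [W0 [W0c W0a _]] := main (ltnSn (nsupp f0)) ff0 st.
have [W [Wc Wa Wmin]] := @list_min _ _ cands (fun W => augp (gW W))
  (fun W => cost (gW W)) (ex_intro2 _ _ W0 W0c W0a).
exists (gW W); split => // g fg.
have [W' [W'c W'a W'le]] := main (ltnSn (nsupp g)) fg st.
exact: le_trans (Wmin W' W'c W'a) W'le.
Qed.
End Main.

Theorem lemma1 (R : realFieldType) (V : finType) (E : rel V) (S : {set V})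
  (tau : V) (mu c gamma x : V -> V -> R) (v : V) :
  gnf_instance E S tau mu c gamma ->
  feasible_x E mu x ->
  v != tau ->
  (exists f, frac_aug_path E tau mu gamma x f v) ->
  exists f, aug_path E tau mu gamma x f v /\
    forall g, frac_aug_path E tau mu gamma x g v ->
      flow_cost E mu c x f <= flow_cost E mu c x g.
Proof.
move=> gnf _ vt H; exact: (lemma1_sec gnf vt H).
Qed.
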